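(* Let $G$ be an elementary abelian $p$-group of $p$-rank $r$ and $k$ a field of characteristic $p$. Let $\alpha: k[t_1,\dots,t_s]/(t_1^p,\dots,t_s^p)\to kG$ be a flat map with image $A$. Then there exists a flat map $\beta: k[t_1,\dots,t_{r-s}]/(t_1^p,\dots,t_{r-s}^p)\to kG$, with image $B$, such that $kG$ is the internal tensor product $kG = A\otimes B$ (i.e. multiplication $A\otimes_k B\to kG$ is an isomorphism).
   Context: Write $kG\cong k[X_1,\dots,X_r]/(X_1^p,\dots,X_r^p)$ with $X_i=g_i-1$ for generators $g_i$ of $G$. A flat map $\alpha: k[t_1,\dots,t_s]/(t_1^p,\dots,t_s^p)\to kG$ is a $k$-algebra homomorphism such that $kG$ is projective over its image; equivalently, the classes of $\alpha(t_1),\dots,\alpha(t_s)$ in $\operatorname{Rad}(kG)/\operatorname{Rad}^2(kG)$ are $k$-linearly independent. Its image is called a flat subalgebra. *)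

(* Defs.v *)
From HB Require Import structures.
From mathcomp Require Import all_boot all_order all_algebra all_fingroup all_solvable all_field.
Set Implicit Arguments. Unset Strict Implicit. Unset Printing Implicit Defensive.
Import GRing.Theory.
Local Open Scope ring_scope.

Definition is_group_algebra (F : fieldType) (L : falgType F)
    (gT : finGroupType) (G : {group gT}) (e : gT -> L) : Prop :=
  [/\ e 1%g = 1,
      {in G &, forall x y, e (x * y)%g = e x * e y}
    & basis_of fullv [seq e x | x in G] ].

Definition in_rad (F : fieldType) (L : falgType F) (x : L) : Prop :=
  forall y : L, (1 - y * x) \is a GRing.unit.

Definition in_rad2 (F : fieldType) (L : falgType F) (x : L) : Prop :=
  exists n (a b : 'I_n -> L),
    (forall j, in_rad (a j) /\ in_rad (b j)) /\ x = \sum_(j < n) a j * b j.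

(* A k-algebra map alpha : k[t_1..t_s]/(t_1^p,..,t_s^p) -> L is given by the
   images u i = alpha(t_i), subject to the defining relations u_i^p = 0
   (and pairwise commutation). *)
Definition trunc_poly_hom (F : fieldType) (L : falgType F) (p s : nat)
    (u : 'I_s -> L) : Prop :=
  (forall i, u i ^+ p = 0) /\ (forall i j, u i * u j = u j * u i).

(* alpha is flat: the classes of alpha(t_i) in Rad(L)/Rad^2(L) are linearly
   independent. *)
Definition flat_map (F : fieldType) (L : falgType F) (p s : nat)
    (u : 'I_s -> L) : Prop :=
  trunc_poly_hom p u /\ (forall i, in_rad (u i)) /\
  (forall c : 'I_s -> F, in_rad2 (\sum_(i < s) c i *: u i) -> forall i, c i = 0).

Definition trunc_monomial (F : fieldType) (L : falgType F) (p s : nat)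
    (u : 'I_s -> L) (a : {ffun 'I_s -> 'I_p}) : L :=
  \prod_(i < s) u i ^+ a i.

(* The image of alpha: the span of the images of the monomial basis
   t^a (0 <= a_i < p) of k[t]/(t^p). *)
Definition flat_image (F : fieldType) (L : falgType F) (p s : nat)
    (u : 'I_s -> L) : {vspace L} :=
  <<[seq trunc_monomial u a | a : {ffun 'I_s -> 'I_p}]>>%VS.

(* L is the internal tensor product A (x) B: the multiplication map
   A (x)_k B -> L is an isomorphism, i.e. it maps the tensor basis
   (a_i (x) b_j) to a basis (a_i b_j) of L. *)
Definition internal_tensor (F : fieldType) (L : falgType F)
    (A B : {vspace L}) : Prop :=
  basis_of fullv [seq a * b | a <- vbasis A, b <- vbasis B].

(* Main.v *)
Require Import Defs.
From HB Require Import structures.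
From mathcomp Require Import all_boot all_order all_algebra all_fingroup all_solvable all_field.
From mathcomp Require Import mxabelem ring zify.
Set Implicit Arguments. Unset Strict Implicit. Unset Printing Implicit Defensive.
Import GRing.Theory.
Local Open Scope ring_scope.


Section Core.
Variables (F : fieldType) (L0 : falgType F).
Hypothesis mulC0 : commutative (@GRing.mul L0).
Definition LC (h : commutative (@GRing.mul L0)) : Type := L0.
HB.instance Definition _ := Falgebra.on (LC mulC0).
HB.instance Definition _ := GRing.PzRing_hasCommutativeMul.Build (LC mulC0) mulC0.
Local Notation L := (LC mulC0).

Lemma prodvC (U V : {vspace L}) : (U * V = V * U)%VS.
Proof.
by apply/eqP; rewrite eqEsubv; apply/andP; split; apply/prodvP => x y Hx Hy;
  rewrite mulrC memv_mul.
Qed.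

Lemma prod_sub_alg (A B : {vspace L}) :
  (A * A <= A)%VS -> (B * B <= B)%VS -> ((A * B) * (A * B) <= A * B)%VS.
Proof.
move=> AA BB.
have -> : ((A * B) * (A * B) = (A * A) * (B * B))%VS.
  by rewrite -!prodvA [(B * (A * B))%VS]prodvA [(B * A)%VS]prodvC -prodvA prodvA.
exact: prodvS.
Qed.

Lemma dim_aux (U J W : {vspace L}) a m : \dim U = a -> (\dim W <= m)%N ->
  \dim (U + J + W) = (a + \dim J + m)%N -> \dim W = m /\ \dim (J :&: W) = 0%N.
Proof.
move=> dU dWm dS.
have h1 := dimv_sum_cap U (J + W); have h2 := dimv_sum_cap J W.
rewrite addvA dS dU in h1; lia.
Qed.

Lemma span_prod_sub (X Y : seq L) (T : {vspace L}) :
  {in X & Y, forall x y, x * y \in T} -> (<<X>> * <<Y>> <= T)%VS.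
Proof.
move=> H; apply/prodvP => a b /(coord_span (X := in_tuple X)) ->
  /(coord_span (X := in_tuple Y)) ->.
rewrite mulr_suml; apply: memv_suml => i _; rewrite mulr_sumr.
apply: memv_suml => j _; rewrite -scalerAl -scalerAr !memvZ //; apply: H; exact: mem_nth.
Qed.

Lemma expv_add_nil (U V : {vspace L}) a b :
  (U ^+ a = 0)%VS -> (V ^+ b = 0)%VS -> ((U + V) ^+ (a + b) = 0)%VS.
Proof.
move=> Ua Vb.
suff H : forall k i j, (a + b <= i + j + k)%N ->
    (U ^+ i * V ^+ j * (U + V) ^+ k = 0)%VS.
  by have := H (a + b)%N 0%N 0%N (leqnn _); rewrite !expv0 !prod1v.
elim=> [|k IH] i j hk.
  rewrite addn0 in hk; case: (leqP a i) => hi.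
    by rewrite -(subnKC hi) expvD Ua !prod0v.
  have hj : (b <= j)%N by rewrite -(leq_add2l a); apply: leq_trans hk _; rewrite leq_add2r ltnW.
  by rewrite -(subnKC hj) expvD Vb prod0v prodv0 prod0v.
rewrite expvSl prodvDl !prodvDr.
have -> : (U ^+ i * V ^+ j * (U * (U + V) ^+ k) = U ^+ i.+1 * V ^+ j * (U + V) ^+ k)%VS.
  by rewrite expvSr -!prodvA [(V ^+ j * (U * _))%VS]prodvA [(V ^+ j * U)%VS]prodvC -!prodvA.
have -> : (U ^+ i * V ^+ j * (V * (U + V) ^+ k) = U ^+ i * V ^+ j.+1 * (U + V) ^+ k)%VS.
  by rewrite expvSr -!prodvA.
by rewrite !IH ?addv0 // (leq_trans hk) // ?addSn ?addnS.
Qed.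

Lemma span_nilp (X : seq L) n : (forall x, x \in X -> x ^+ n = 0) ->
  (<<X>> ^+ (n * size X).+1 = 0)%VS.
Proof.
elim: X => [|x X IH] H; first by rewrite span_nil expv0n.
rewrite span_cons /= mulnS -addnS expv_add_nil //.
  by rewrite expv_line H ?mem_head // -span_seq1 span_nil. 
by apply: IH => y Hy; apply: H; rewrite in_cons Hy orbT.
Qed.

Lemma nakayama (I W R : {vspace L}) N : (W <= I)%VS -> (W <= R)%VS ->
  (R * R <= R)%VS -> (I <= W + I * I)%VS -> (I ^+ N = 0)%VS -> (I <= R)%VS.
Proof.
move=> WI WR RR IW IN.
have WkR : forall k, (W ^+ k.+1 <= R)%VS.
  elim=> [|k IH]; first by rewrite expv1.
  by rewrite expvSl (subv_trans _ RR) // prodvS.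
have step : forall k, (I ^+ k.+1 <= W ^+ k.+1 + I ^+ k.+2)%VS.
  elim=> [|k IH]; first by rewrite expv1 expv2.
  rewrite expvSr (subv_trans (prodvSl _ IH)) // prodvDl.
  rewrite -expvSr subv_add addvSr andbT.
  rewrite (subv_trans (prodvSr _ IW)) // prodvDr -expvSr addvS //.
  by rewrite (subv_trans (prodvSl _ (expvS k.+1 WI))) // -expv2 -expvD addn2.
have key : forall k, (I <= R + I ^+ k.+1)%VS.
  elim=> [|k IH]; first by rewrite expv1 addvSr.
  rewrite (subv_trans IH) // -{2}[R]addvv -addvA addvS // (subv_trans (step k)) //.
  by rewrite addvS.
by have := key N; rewrite expvSl IN prodv0 addv0.
Qed.


Section Mono.
Variables (p s : nat) (u : 'I_s -> L).

Lemma mem_flat (a : {ffun 'I_s -> 'I_p}) : trunc_monomial u a \in flat_image p u.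
Proof. by apply: memv_span; apply/mapP; exists a; rewrite ?mem_enum. Qed.

Lemma flat1 : (0 < p)%N -> 1 \in flat_image p u.
Proof.
move=> hp; have := mem_flat [ffun _ => Ordinal hp].
by rewrite /trunc_monomial big1 // => i _; rewrite ffunE expr0.
Qed.

Lemma flat_gen i : (1 < p)%N -> u i \in flat_image p u.
Proof.
move=> hp.
have := mem_flat [ffun j => Ordinal (leq_ltn_trans (leq_b1 (j == i)) hp)].
rewrite /trunc_monomial (bigD1 i) //= big1 ?mulr1 ?ffunE ?eqxx ?expr1 //.
by move=> j /negbTE hj; rewrite ffunE /= hj expr0.
Qed.

Lemma flat_dim : (\dim (flat_image p u) <= p ^ s)%N.
Proof.
apply: leq_trans (dim_span _) _.
by rewrite size_map -cardE card_ffun !card_ord.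
Qed.

Lemma flat_mul : (forall i, u i ^+ p = 0) ->
  (flat_image p u * flat_image p u <= flat_image p u)%VS.
Proof.
move=> up; apply: span_prod_sub => _ _ /mapP[a _ ->] /mapP[b _ ->].
have -> : trunc_monomial u a * trunc_monomial u b =
    \prod_(i < s) u i ^+ (a i + b i).
  by rewrite /trunc_monomial -big_split; apply: eq_bigr => i _; rewrite exprD.
case: (boolP [forall i, (a i + b i < p)%N]) => [/forallP H | ].
  have := mem_flat [ffun i => Ordinal (H i)].
  by rewrite /trunc_monomial; under eq_bigr do rewrite ffunE.
rewrite negb_forall => /existsP[i]; rewrite -leqNgt => hi.
rewrite (bigD1 i) //= -(subnKC hi) exprD up mul0r mul0r.
exact: mem0v.
Qed.

End Mono.

End Core.


Section Grp.
Variables (F : fieldType) (L0 : falgType F).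
Hypothesis mulC0 : commutative (@GRing.mul L0).
Local Notation L := (LC mulC0).
Variables (p : nat) (gT : finGroupType) (G : {group gT}) (e : gT -> L).
Hypotheses (pp : prime p) (chF : p \in [pchar F]) (abG : (p.-abelem G)%g)
  (gaG : is_group_algebra G e).

Definition X0 := [seq e g | g in G].
Definition X := [seq y - 1 | y <- X0].
Definition I := <<X>>%VS.
Definition J := (I * I)%VS.

Lemma e1 : e 1%g = 1. Proof. by case: gaG. Qed.
Lemma eM : {in G &, forall x y, e (x * y)%g = e x * e y}. Proof. by case: gaG. Qed.
Lemma basX0 : basis_of fullv X0. Proof. by case: gaG. Qed.

Lemma charL : p \in [pchar L]. Proof. by rewrite (pchar_lalg L). Qed.

Lemma eX g n : g \in G -> e (g ^+ n)%g = e g ^+ n.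
Proof.
move=> Hg; elim: n => [|n IH]; first by rewrite expg0 expr0 e1.
by rewrite expgS eM ?groupX // IH exprS.
Qed.

Lemma memX g : g \in G -> e g - 1 \in X.
Proof. by move=> Hg; apply: (map_f (fun y => y - 1)); apply: image_f. Qed.

Lemma XP x : x \in X -> exists2 g, g \in G & x = e g - 1.
Proof. by case/mapP => y /imageP[g Hg ->] ->; exists g. Qed.

Lemma Xp x : x \in X -> x ^+ p = 0.
Proof.
case/XP => g Hg ->; have /(abelemP pp) [_ gp] := abG.
have := pFrobenius_autB_comm charL (commr1 (e g)).
by rewrite !pFrobenius_autE => ->; rewrite -eX // gp // e1 expr1n subrr.
Qed.

Definition Nn := (p * size X).+1.
Lemma Inil : (I ^+ Nn = 0)%VS. Proof. exact: span_nilp Xp. Qed.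

Lemma memv_exp (U : {vspace L}) x n : x \in U -> x ^+ n \in (U ^+ n)%VS.
Proof.
move=> Ux; elim: n => [|n IH]; first by rewrite expr0 expv0 memv_line.
by rewrite exprS expvSl memv_mul.
Qed.

Lemma Inilx x : x \in I -> x ^+ Nn = 0.
Proof. by move=> /(memv_exp Nn); rewrite Inil memv0 => /eqP. Qed.

Lemma unit_nil (z : L) n : z ^+ n = 0 -> (1 - z) \is a GRing.unit.
Proof.
move=> zn; apply/unitrPr; exists (\sum_(i < n) z ^+ i).
by rewrite -opprB mulNr -subrX1 zn sub0r opprK.
Qed.

Lemma Irad x : x \in I -> in_rad x.
Proof.
move=> Ix y; apply: (@unit_nil _ Nn).
by rewrite exprMn (Inilx Ix) mulr0.
Qed.

Lemma unit_notI z : z \in I -> z \is a GRing.unit -> False.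
Proof. by move=> Iz /(unitrX Nn); rewrite Inilx // unitr0. Qed.

Lemma decomp x : exists c : F, x - c%:A \in I.
Proof.
have sp := span_basis basX0.
have : x \in <<X0>>%VS by rewrite sp memvf.
move/(coord_span (X := in_tuple X0)) => ->.
exists (\sum_i coord (in_tuple X0) i x).
rewrite scaler_suml -sumrB; apply: memv_suml => i _.
rewrite -scalerBr memvZ // memv_span //.
by apply: (map_f (fun y => y - 1)); apply: mem_nth.
Qed.

Lemma radI x : in_rad x -> x \in I.
Proof.
move=> rx; have [c Hc] := decomp x.
case: (eqVneq c 0) => [c0|cn0]; first by move: Hc; rewrite c0 scale0r subr0.
exfalso; apply: (@unit_notI (1 - c^-1%:A * x)); last exact: rx.
have -> : 1 - c^-1%:A * x = - (c^-1 *: (x - c%:A)).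
  by rewrite mulr_algl scalerBr scalerA mulVf // scale1r opprB.
by rewrite memvN memvZ.
Qed.

Lemma full_dec : (fullv <= 1 + I)%VS.
Proof.
apply/subvP => x _; have [c Hc] := decomp x.
rewrite -(subrK (c%:A) x) addrC memv_add //.
by rewrite memvZ // memv_line.
Qed.

Lemma rad2J x : in_rad2 x -> x \in J.
Proof.
case=> n [a [b [H ->]]]; apply: memv_suml => j _.
by apply: memv_mul; apply: radI; [exact: (H j).1 | exact: (H j).2].
Qed.

Lemma Jrad2 x : x \in J -> in_rad2 x.
Proof.
rewrite /J unlock.
pose P := [seq (a, b) | a <- vbasis I, b <- vbasis I].
have EP : [seq q.1 * q.2 | q <- P] = allpairs *%R (vbasis I) (vbasis I).
  by rewrite map_allpairs.
rewrite -EP => /(coord_span (X := in_tuple _)) ->.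
set T := [seq q.1 * q.2 | q <- P].
exists (size T), (fun i => coord (in_tuple T) i x *: (nth (0, 0) P i).1),
  (fun i => (nth (0, 0) P i).2).
split.
  move=> i; have iP : (i < size P)%N by rewrite -(size_map (fun q => q.1 * q.2)).
  have /allpairsP[q [q1 q2 ->]] := mem_nth (0, 0) iP.
  by split; apply: Irad; rewrite ?memvZ // vbasis_mem.
apply: eq_bigr => i _; rewrite (nth_map (0, 0)) ?scalerAl //.
by rewrite -(size_map (fun q => q.1 * q.2)).
Qed.

Lemma gens r : logn p #|G| = r -> exists X' : seq L,
  [/\ size X' = r, {subset X' <= X} & (I <= <<X'>> + J)%VS].
Proof.
move=> <-.
case: (eqVneq (G : {set gT}) 1%g) => [G1 | ntG].
  exists [::]; split => //; first by rewrite G1 cards1 logn1.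
  apply/span_subvP => x /XP [g Hg ->]; move: Hg; rewrite G1 inE => /eqP ->.
  by rewrite e1 subrr mem0v.
pose g i := rVabelem abG ntG (delta_mx 0 i).
exists [seq e (g i) - 1 | i <- enum 'I_(abelem_dim' G).+1]; split.
- by rewrite size_map size_enum_ord (dim_abelemE abG ntG).
- by move=> _ /mapP[i _ ->]; apply: memX; exact: mem_rVabelem.
set K := (<< _ >> + J)%VS.
have Hmul : forall x y, x \in G -> y \in G -> e x - 1 \in K -> e y - 1 \in K ->
    e (x * y)%g - 1 \in K.
  move=> x y Hx Hy Kx Ky.
  have -> : e (x * y)%g - 1 = (e x - 1) * (e y - 1) + (e x - 1) + (e y - 1).
    by rewrite eM //; ring.
  apply: memvD => //; apply: memvD => //; apply: (subvP (addvSr _ _)).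
  by apply: memv_mul; apply: memv_span; exact: memX.
have Hpow : forall x n, x \in G -> e x - 1 \in K -> e (x ^+ n)%g - 1 \in K.
  move=> x n Hx Kx; elim: n => [|n IH]; first by rewrite expg0 e1 subrr mem0v.
  by rewrite expgS Hmul // groupX.
have HK : forall x, x \in G -> e x - 1 \in K.
  move=> x Hx; rewrite -(abelem_rV_K abG ntG Hx).
  rewrite (row_sum_delta (abelem_rV abG ntG x)).
  rewrite (big_morph _ (rVabelemD abG ntG) (rVabelem0 abG ntG)).
  suff [] : (\prod_(j < (abelem_dim' G).+1)
      rVabelem abG ntG ((abelem_rV abG ntG x) 0 j *: delta_mx 0 j) \in G)%g /\
     e (\prod_(j < (abelem_dim' G).+1)
      rVabelem abG ntG ((abelem_rV abG ntG x) 0 j *: delta_mx 0 j))%g - 1 \in K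
    by [].
  apply: (big_ind (fun z => z \in G /\ e z - 1 \in K)).
  - by split; [exact: group1 | rewrite e1 subrr mem0v].
  - by move=> a b [Ga Ka] [Gb Kb]; split; [exact: groupM | exact: Hmul].
  move=> j _; rewrite rVabelemZ; split; first by rewrite groupX ?mem_rVabelem.
  apply: Hpow; first exact: mem_rVabelem.
  apply: (subvP (addvSl _ _)); apply: memv_span.
  by apply: (map_f (fun i => e (g i) - 1)); rewrite mem_enum.
by apply/span_subvP => _ /XP[x Hx ->]; exact: HK.
Qed.

Lemma dimfull r : logn p #|G| = r -> \dim (fullv : {vspace L}) = (p ^ r)%N.
Proof.
move=> <-; rewrite (size_basis (X := in_tuple X0) basX0) /= size_map -cardE.
exact: card_pgroup (abelem_pgroup abG).
Qed.


Lemma indep_dim n (w : 'I_n -> L) (K : {vspace L}) :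
  (forall c : 'I_n -> F, \sum_(i < n) c i *: w i \in K -> forall i, c i = 0) ->
  \dim <<mktuple w>> = n /\ (<<mktuple w>> :&: K = 0)%VS.
Proof.
move=> H.
have E : forall c : 'I_n -> F,
    \sum_(i < n) c i *: (mktuple w)`_i = \sum_(i < n) c i *: w i.
  by move=> c; apply: eq_bigr => j _; rewrite nth_mktuple.
have fr : free (mktuple w).
  apply/freeP => k Hk i; apply: (H k); rewrite -E Hk; exact: mem0v.
split; first by move: fr; rewrite /free size_tuple => /eqP.
apply/eqP; rewrite -subv0; apply/subvP => x /memv_capP[xU xK].
move: xU xK => /(coord_span (X := mktuple w)) ->; rewrite E => xK.
have c0 := H _ xK; rewrite memv0; apply/eqP; apply: big1 => i _.
by rewrite c0 scale0r.
Qed.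

Lemma dim_indep n (w : 'I_n -> L) (K : {vspace L}) :
  \dim <<mktuple w>> = n -> (<<mktuple w>> :&: K = 0)%VS ->
  forall c : 'I_n -> F, \sum_(i < n) c i *: w i \in K -> forall i, c i = 0.
Proof.
move=> hd hc c Hc.
have E : \sum_(i < n) c i *: (mktuple w)`_i = \sum_(i < n) c i *: w i.
  by apply: eq_bigr => j _; rewrite nth_mktuple.
have fr : free (mktuple w) by rewrite /free size_tuple hd.
move/freeP: fr => fr; apply: fr; rewrite E.
have : \sum_(i < n) c i *: w i \in (<<mktuple w>> :&: K)%VS.
  rewrite memv_cap Hc andbT; apply: memv_suml => i _; apply: memvZ.
  by have := memv_span (mem_tnth i (mktuple w)); rewrite tnth_mktuple.
by rewrite hc memv0 => /eqP.
Qed.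

Lemma greedy (Y : seq L) (K : {vspace L}) : exists w : seq L,
  [/\ {subset w <= Y}, (<<Y>> <= K + <<w>>)%VS &
      \dim (K + <<w>>) = (\dim K + size w)%N].
Proof.
elim: Y K => [|y Y IH] K.
  by exists [::]; split => //; rewrite span_nil ?sub0v // addv0 addn0.
case: (boolP (y \in K)) => yK.
  have [w [ww Yw dw]] := IH K; exists w; split => //.
    by move=> z /ww zY; rewrite in_cons zY orbT.
  by rewrite span_cons subv_add Yw andbT (subv_trans _ (addvSl _ _)) // -memvE.
have [w [ww Yw dw]] := IH (K + <[y]>)%VS.
exists (y :: w); split.
- by move=> z; rewrite !in_cons => /orP[-> // | /ww ->]; rewrite orbT.
- rewrite !span_cons addvA subv_add Yw andbT.
  exact: (subv_trans (addvSr K _) (addvSl _ _)).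
rewrite span_cons addvA dw /=.
have y0 : y != 0 by apply: contraNneq yK => ->; exact: mem0v.
have cap0 : (K :&: <[y]> = 0)%VS.
  apply/eqP; rewrite -subv0; apply/subvP => z /memv_capP[zK /vlineP[a za]].
  rewrite memv0; case: (eqVneq a 0) => [a0 | an0]; first by rewrite za a0 scale0r.
  exfalso; move/negP: yK; apply.
  have -> : y = a^-1 *: z by rewrite za scalerA mulVf // scale1r.
  exact: memvZ.
by rewrite (dimv_disjoint_sum cap0) dim_vline y0 /=; lia.
Qed.

Section Assembly.
Variables (r s : nat) (u : 'I_s -> L).
Hypotheses (hr : logn p #|G| = r) (flu : flat_map p u).

Lemma core : exists v : 'I_(r - s) -> L,
  flat_map p v /\ internal_tensor (flat_image p u) (flat_image p v).
Proof.
have [[up uc] [ur uind]] := flu.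
have p1 : (1 < p)%N := prime_gt1 pp.
have p0 : (0 < p)%N := prime_gt0 pp.
have uI : forall i, u i \in I := fun i => radI (ur i).
have uJ : forall c : 'I_s -> F, \sum_(i < s) c i *: u i \in J -> forall i, c i = 0.
  by move=> c H; apply: uind; apply: Jrad2.
have [dU capU] := indep_dim uJ.
set U := <<mktuple u>>%VS in dU capU.
have UI : (U <= I)%VS by apply/span_subvP => _ /mapP[i _ ->]; exact: uI.
have [X' [sX' subX' IX']] := gens hr.
have [w [ww Xw dw]] := greedy X' (U + J)%VS.
have dUJ : \dim (U + J) = (s + \dim J)%N by rewrite dimv_disjoint_sum // dU.
have le1 : (s + size w <= r)%N.
  have sub : (U + J + <<w>> <= <<X'>> + J)%VS.
    rewrite !subv_add (subv_trans UI IX') addvSr /=.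
    apply: (subv_trans _ (addvSl _ _)); apply/span_subvP => z /ww zX.
    exact: memv_span.
  have := dimvS sub; rewrite dw dUJ.
  have := dimv_sum_cap <<X'>> J; have := dim_span X'; rewrite sX'.
  move=> a b c.
  have e1 : (\dim (<<X'>> + J) <= \dim <<X'>> + \dim J)%N by rewrite -b leq_addr.
  have := leq_trans c e1; rewrite addnAC leq_add2r => h; exact: leq_trans h a.
have nak_gen : forall m (v : 'I_m -> L), (forall j, v j \in X) ->
    (I <= U + <<mktuple v>> + J)%VS ->
    (flat_image p u * flat_image p v)%VS = fullv.
  move=> m v vX IUV.
  set A := flat_image p u; set B := flat_image p v; set R := (A * B)%VS.
  have vp : forall j, v j ^+ p = 0 := fun j => Xp (vX j).
  have A1 : 1 \in A := flat1 u p0.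
  have B1 : 1 \in B := flat1 v p0.
  have WR : (U + <<mktuple v>> <= R)%VS.
    rewrite subv_add; apply/andP; split; apply/span_subvP => _ /mapP[i _ ->].
    - by rewrite -[u i]mulr1 memv_mul // flat_gen.
    - by rewrite -[v i]mul1r memv_mul // flat_gen.
  have WI : (U + <<mktuple v>> <= I)%VS.
    rewrite subv_add UI /=; apply/span_subvP => _ /mapP[i _ ->].
    exact: memv_span (vX i).
  have RR : (R * R <= R)%VS.
    by apply: prod_sub_alg; apply: flat_mul.
  have IR := nakayama WI WR RR IUV Inil.
  apply/eqP; rewrite eqEsubv subvf /=.
  apply: subv_trans full_dec _; rewrite subv_add IR andbT -memvE.
  by rewrite -[1]mulr1 memv_mul.
have IUVw : forall m (v : 'I_m -> L), (mktuple v : seq L) = w ->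
    (I <= U + <<mktuple v>> + J)%VS.
  move=> m v ->; apply: (subv_trans IX'); rewrite subv_add addvSr andbT.
  apply: (subv_trans Xw).
  have E : forall A B C : {vspace L}, (A + B + C <= A + C + B)%VS.
    by move=> A B C; rewrite -addvA [(B + C)%VS]addvC addvA.
  exact: E.
have vXw : forall m (v : 'I_m -> L), (mktuple v : seq L) = w -> forall j, v j \in X.
  move=> m v vw j; apply: subX'; apply: ww; rewrite -vw.
  by have := mem_tnth j (mktuple v); rewrite tnth_mktuple.
have seqw : forall m, m = size w -> (mktuple (fun j : 'I_m => nth 0 w j) : seq L) = w.
  move=> m hm; rewrite /= -[in RHS](mkseq_nth 0 w) -hm /mkseq -val_enum_ord.
  by rewrite -map_comp.
have full0 := nak_gen _ _ (vXw _ _ (seqw _ erefl)) (IUVw _ _ (seqw _ erefl)).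
have le2 : (r <= s + size w)%N.
  have : (p ^ r <= p ^ s * p ^ size w)%N.
    rewrite -(dimfull hr) -full0; apply: leq_trans (dim_prodv _ _) _.
    by apply: leq_mul; apply: flat_dim.
  by rewrite -expnD leq_exp2l.
have hm : (r - s)%N = size w by lia.
pose v (j : 'I_(r - s)) := nth 0 w j.
have vw : (mktuple v : seq L) = w := seqw _ hm.
have vX := vXw _ _ vw.
have full := nak_gen _ _ vX (IUVw _ _ vw).
set W := <<mktuple v>>%VS.
have dw' : \dim (U + J + W) = (s + \dim J + (r - s))%N.
  by rewrite -dUJ hm -dw /W vw.
have h3 := dim_span (mktuple v); rewrite size_tuple in h3.
have dW := dim_aux dU h3 dw'.
have capWJ : (W :&: J = 0)%VS by apply/eqP; rewrite capvC -dimv_eq0 dW.2.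
have vind := dim_indep dW.1 capWJ.
exists v; split.
  split; first by split => [j | i j]; [exact: Xp | exact: mulrC].
  split; first by move=> j; apply: Irad; exact: memv_span.
  by move=> c H; apply: vind; apply: rad2J.
rewrite /internal_tensor basisEdim; apply/andP; split.
  by rewrite -full unlock; exact: subvv.
rewrite size_allpairs !size_tuple (dimfull hr).
have sr : (s <= r)%N by lia.
have -> : (p ^ r = p ^ s * p ^ (r - s))%N by rewrite -expnD subnKC.
by rewrite leq_mul ?flat_dim.
Qed.

End Assembly.

End Grp.



Lemma ga_comm (F : fieldType) (L : falgType F) (gT : finGroupType)
  (G : {group gT}) (e : gT -> L) :
  abelian G -> is_group_algebra G e -> commutative (@GRing.mul L).
Proof.
move=> abG [_ eM bas] x y.
have cX : forall a b, a \in [seq e g | g in G] -> b \in [seq e g | g in G] ->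
    a * b = b * a.
  move=> _ _ /imageP[g Hg ->] /imageP[h Hh ->]; rewrite -!eM //.
  by rewrite (centsP abG g Hg h Hh).
have xs : x \in <<[seq e g | g in G]>>%VS by rewrite (span_basis bas) memvf.
have ys : y \in <<[seq e g | g in G]>>%VS by rewrite (span_basis bas) memvf.
move: xs ys => /(coord_span (X := in_tuple _)) -> /(coord_span (X := in_tuple _)) ->.
apply: commr_sum => i _; apply: commr_sym; apply: commr_sum => j _.
rewrite /GRing.comm -!scalerAl -!scalerAr !scalerA; congr (_ *: _).
  exact: mulrC.
by apply: cX; apply: mem_nth.
Qed.

Theorem lemma2p2 (p r s : nat) (F : fieldType) (L : falgType F)
    (gT : finGroupType) (G : {group gT}) (e : gT -> L)
    (u : 'I_s -> L) :
  prime p -> p \in [pchar F] ->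
  (p.-abelem G)%g -> logn p #|G| = r ->
  is_group_algebra G e ->
  flat_map p u ->
  exists v : 'I_(r - s) -> L,
    flat_map p v /\ internal_tensor (flat_image p u) (flat_image p v).
Proof.
move=> pp chF abG hr gaG flu.
have mulC0 := ga_comm (abelem_abelian abG) gaG.
exact: (@core F L mulC0 p gT G e pp chF abG gaG r s u hr flu).
Qed.
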